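(* Let $A$ be a real Baer von Neumann regular poring, let $\mathfrak{p}\in\mathrm{Spec}\,A$ and let $B=\prod_{\mathfrak{q}\in\mathrm{Spec}\,A}K_\mathfrak{q}$ be an epof of $A$. Let $e\in B$ be the idempotent with $e(\mathfrak{q})=1$ for $\mathfrak{q}\neq\mathfrak{p}$ and $e(\mathfrak{p})=0$. Then $\mathfrak{p}$ is an isolated point of $\mathrm{Spec}\,A$ if and only if there is an ideal $I$ of $B$ with $I\subset eB$ such that $B/I$ is an essential extension of $A$ (via $A\to B\to B/I$).
   Context: All rings are commutative and unitary. A poring is a ring $A$ with a partial ordering $A^+$ (closed under addition and multiplication, containing all squares). A ring is real if $\sum a_i^2=0$ implies all $a_i=0$; von Neumann regular if every $a$ has $b$ with $a=a^2b$; Baer if the annihilator of every subset is generated by an idempotent. An epof of $A$ is the poring $B=\prod_{\mathfrak{q}\in\mathrm{Spec}\,A}K_\mathfrak{q}$ with $B^+=B^2$, each $K_\mathfrak{q}$ a real closed field algebraic over $\mathrm{qf}(A/\mathfrak{q})$ with $A^+/\mathfrak{q}\subset K_\mathfrak{q}^2$, $A$ embedded diagonally; $b(\mathfrak{q})$ denotes the $\mathfrak{q}$-component of $b\in B$. $A\to D$ is an essential extension if it is injective and every nonzero ideal of $D$ meets the image of $A$ nontrivially. A point is isolated if its singleton is clopen. *)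

(* Defs.v *)
From HB Require Import structures.
From mathcomp Require Import all_boot all_order all_algebra.
From mathcomp Require Import all_field.
From mathcomp.real_closed Require Import polyrcf.
Set Implicit Arguments. Unset Strict Implicit. Unset Printing Implicit Defensive.
Import Order.TTheory GRing.Theory Num.Theory.
Local Open Scope ring_scope.

Definition is_ideal (R : comPzRingType) (I : R -> Prop) : Prop :=
  [/\ I 0, (forall x y, I x -> I y -> I (x + y)) & (forall r x, I x -> I (r * x))].

Definition prime_ideal (R : comPzRingType) (P : R -> Prop) : Prop :=
  [/\ is_ideal P, ~ P 1 & (forall x y, P (x * y) -> P x \/ P y)].

Definition Spec (R : comPzRingType) := { P : R -> Prop | prime_ideal P }.

Definition zariski_closed (R : comPzRingType) (U : Spec R -> Prop) : Prop :=
  exists S : R -> Prop, forall q : Spec R, U q <-> (forall s, S s -> proj1_sig q s).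
Definition zariski_open (R : comPzRingType) (U : Spec R -> Prop) : Prop :=
  exists S : R -> Prop, forall q : Spec R, U q <-> ~ (forall s, S s -> proj1_sig q s).

Definition isolated_point (R : comPzRingType) (p : Spec R) : Prop :=
  zariski_open (fun q => q = p) /\ zariski_closed (fun q => q = p).

Definition real_ring (R : comPzRingType) : Prop :=
  forall (n : nat) (a : 'I_n -> R), \sum_(i < n) a i ^+ 2 = 0 -> forall i, a i = 0.

Definition vN_regular (R : comPzRingType) : Prop :=
  forall a : R, exists b, a = a ^+ 2 * b.

Definition annihilator (R : comPzRingType) (S : R -> Prop) : R -> Prop :=
  fun x => forall s, S s -> x * s = 0.

Definition baer_ring (R : comPzRingType) : Prop :=
  forall S : R -> Prop, exists e : R,
    e * e = e /\ forall x, annihilator S x <-> exists y, x = e * y.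

(* a poring structure: a partial ordering (positive cone) A^+ *)
Definition poring_cone (R : comPzRingType) (Apos : R -> Prop) : Prop :=
  [/\ (forall x y, Apos x -> Apos y -> Apos (x + y)),
      (forall x y, Apos x -> Apos y -> Apos (x * y)),
      (forall x, Apos (x ^+ 2)) &
      (forall x, Apos x -> Apos (- x) -> x = 0)].

(* Data of an epof: for each prime q a real closed field K q together with an
   embedding phi q : A/q -> K q, given as a ring morphism A -> K q with kernel q. *)
Definition is_epof (R : comPzRingType) (Apos : R -> Prop)
  (K : Spec R -> rcfType) (phi : forall q : Spec R, {rmorphism R -> K q}) : Prop :=
  forall q : Spec R,
    [/\ (forall a, phi q a = 0 <-> proj1_sig q a),
        (* K q is algebraic over qf(A/q) (= the fraction field of phi q (A)) *)
        (forall x : K q, exists p : {poly K q},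
            [/\ p != 0, (forall i, exists a, p`_i = phi q a) & root p x]) &
        (forall a, Apos a -> exists y : K q, phi q a = y ^+ 2)].

Definition epB (R : comPzRingType) (K : Spec R -> rcfType) := forall q : Spec R, K q.

Definition epB_add R (K : Spec R -> rcfType) (x y : @epB R K) : epB K := fun q => x q + y q.
Definition epB_mul R (K : Spec R -> rcfType) (x y : @epB R K) : epB K := fun q => x q * y q.
Definition epB_zero R (K : Spec R -> rcfType) : @epB R K := fun q => 0.
Definition epB_one R (K : Spec R -> rcfType) : @epB R K := fun q => 1.

Definition diag R (K : Spec R -> rcfType) (phi : forall q : Spec R, {rmorphism R -> K q}) (a : R) : @epB R K :=
  fun q => phi q a.

Definition is_ideal_B R (K : Spec R -> rcfType) (I : @epB R K -> Prop) : Prop :=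
  [/\ I (epB_zero K), (forall x y, I x -> I y -> I (epB_add x y))
    & (forall r x, I x -> I (epB_mul r x))].

(* D together with pi : B -> D is (a model of) the quotient ring B/I *)
Definition quotient_of R (K : Spec R -> rcfType) (I : @epB R K -> Prop) (D : comPzRingType) (pi : epB K -> D) : Prop :=
  [/\ (forall x y, pi (epB_add x y) = pi x + pi y),
      (forall x y, pi (epB_mul x y) = pi x * pi y),
      pi (epB_one K) = 1,
      (forall d, exists x, pi x = d) &
      (forall x, pi x = 0 <-> I x)].

Definition essential_ext (R D : comPzRingType) (f : R -> D) : Prop :=
  injective f /\
  forall J : D -> Prop, is_ideal J -> (exists d, J d /\ d <> 0) ->
    exists a, J (f a) /\ f a <> 0.

(* Main.v *)
Require Import Defs.
From HB Require Import structures.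
From mathcomp Require Import all_boot all_order all_algebra.
From mathcomp.real_closed Require Import polyrcf.
From mathcomp Require Import generic_quotient ring_quotient.
From mathcomp Require Import boolp classical_sets.
From mathcomp Require Import ring.
Import GRing.Theory.
Local Open Scope classical_set_scope.
Local Open Scope ring_scope.
Local Open Scope quotient_scope.
Section BTsec.
Variables (A : comPzRingType) (K : Spec A -> rcfType).
Definition BT : Type := epB K.
HB.instance Definition _ := gen_eqMixin BT.
HB.instance Definition _ := gen_choiceMixin BT.
Definition BTadd (x y : BT) : BT := epB_add x y.
Definition BTopp (x : BT) : BT := fun q => - x q.
Definition BT0 : BT := epB_zero K.
Definition BTmul (x y : BT) : BT := epB_mul x y.
Definition BT1 : BT := epB_one K.
Ltac fx := move=> *; apply: functional_extensionality_dep => q.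
Lemma BTaddA : associative BTadd. Proof. fx; exact: addrA. Qed.
Lemma BTaddC : commutative BTadd. Proof. fx; exact: addrC. Qed.
Lemma BTadd0 : left_id BT0 BTadd. Proof. fx; exact: add0r. Qed.
Lemma BTaddN : left_inverse BT0 BTopp BTadd. Proof. fx; exact: addNr. Qed.
HB.instance Definition _ := GRing.isZmodule.Build BT BTaddA BTaddC BTadd0 BTaddN.
Lemma BTmulA : associative BTmul. Proof. fx; exact: mulrA. Qed.
Lemma BTmulC : commutative BTmul. Proof. fx; exact: mulrC. Qed.
Lemma BTmul1 : left_id BT1 BTmul. Proof. fx; exact: mul1r. Qed.
Lemma BTmulD : left_distributive BTmul BTadd. Proof. fx; exact: mulrDl. Qed.
HB.instance Definition _ := GRing.Zmodule_isComPzRing.Build BT BTmulA BTmulC BTmul1 BTmulD.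
End BTsec.
Arguments BT {A} K.
Section BTE.
Variables (A : comPzRingType) (K : Spec A -> rcfType) (x y : BT K) (q : Spec A).
Lemma BTmulE : (x * y) q = x q * y q. Proof. by []. Qed.
Lemma BTaddE : (x + y) q = x q + y q. Proof. by []. Qed.
Lemma BToppE : (- x) q = - x q. Proof. by []. Qed.
Lemma BTsubE : (x - y) q = x q - y q. Proof. by []. Qed.
Lemma BT1E : (1 : BT K) q = 1. Proof. by []. Qed.
Lemma BT0E : (0 : BT K) q = 0. Proof. by []. Qed.
End BTE.
Definition BTE := (BTmulE, BTsubE, BTaddE, BToppE, BT1E, BT0E).

Section QuotB.
Variables (A : comPzRingType) (K : Spec A -> rcfType) (p0 : Spec A).
Definition BTn (p : Spec A) : Type := BT K.
Local Notation BTp := (BTn p0).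
HB.instance Definition _ := GRing.ComPzRing.copy BTp (BT K).
Lemma BT10 : (1 : BTp) != 0.
Proof. apply/eqP => /(f_equal (fun x : BTp => x p0)); exact/eqP/oner_neq0. Qed.
HB.instance Definition _ := GRing.PzSemiRing_isNonZero.Build BTp BT10.

Variables (I : epB K -> Prop) (HI : is_ideal_B I) (HI1 : ~ I (epB_one K)).
Definition Ip : {pred BTp} := fun x => `[< I x >].
Lemma Ip_closed : idealr_closed Ip.
Proof.
case: HI => I0 ID IM; split.
- exact/asboolP.
- by apply/negP => /asboolP.
- move=> a u v /asboolP Hu /asboolP Hv; apply/asboolP.
  exact: (ID _ _ (IM a u Hu) Hv).
Qed.
HB.instance Definition _ := isIdealr.Build BTp Ip Ip_closed.

Local Notation Dq := {ideal_quot Ip}.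
Local Notation piq := (\pi_Dq : BTp -> Dq).
Lemma quot_exists : exists (D : comPzRingType) (pi : epB K -> D), quotient_of I pi.
Proof.
exists {ideal_quot Ip}; exists piq.
split.
- move=> x y; exact: (rmorphD piq x y).
- move=> x y; exact: (rmorphM piq x y).
- exact: (rmorph1 piq).
- move=> d; exists (repr d); exact: reprK.
- move=> x; split.
  + move=> /eqP; rewrite -(rmorph0 piq).
    rewrite -Quotient.idealrBE subr0 => /asboolP //.
  + move=> Hx; apply/eqP; rewrite -(rmorph0 piq).
    by rewrite -Quotient.idealrBE subr0; apply/asboolP.
Qed.
End QuotB.

Section ALemmas.
Variable (A : comPzRingType).
Implicit Types (q : Spec A).

Lemma pr0 q : proj1_sig q 0. Proof. by case: q => P [[]]. Qed.
Lemma prD q x y : proj1_sig q x -> proj1_sig q y -> proj1_sig q (x + y).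
Proof. by case: q => P [[]] /= _ H _ _ _; exact: H. Qed.
Lemma prMl q r x : proj1_sig q x -> proj1_sig q (r * x).
Proof. by case: q => P [[]] /= _ _ H _ _; exact: H. Qed.
Lemma prMr q r x : proj1_sig q x -> proj1_sig q (x * r).
Proof. by rewrite mulrC; exact: prMl. Qed.
Lemma prN q x : proj1_sig q x -> proj1_sig q (- x).
Proof. by move=> H; rewrite -mulN1r; exact: prMl. Qed.
Lemma pr1 q : ~ proj1_sig q 1. Proof. by case: q => P [? H ?]. Qed.
Lemma prP q x y : proj1_sig q (x * y) -> proj1_sig q x \/ proj1_sig q y.
Proof. by case: q => P [? ? H]; exact: H. Qed.

Hypothesis Hv : vN_regular A.

Lemma idemP (a : A) : exists g : A, g * g = g /\ a * g = a /\ exists b, g = a * b.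
Proof.
have [b Hb] := Hv a; exists (a * b); split; last split; last by exists b.
- by rewrite mulrACA -expr2 mulrA -Hb.
- by rewrite mulrA -expr2 -Hb.
Qed.


Lemma spec_eq (p q : Spec A) : (forall x, proj1_sig p x <-> proj1_sig q x) -> p = q.
Proof.
case: p q => P HP [Q HQ] /= H; apply: eq_exist.
apply: funext => x; apply: propext; exact: H.
Qed.

Lemma spec_neq (p q : Spec A) : q <> p ->
  exists k, proj1_sig p k /\ ~ proj1_sig q k.
Proof.
move=> nqp; apply: contrapT => Hn.
have pq : forall k, proj1_sig p k -> proj1_sig q k.
  move=> k pk; apply: contrapT => qk; apply: Hn; by exists k.
apply: nqp; apply: spec_eq => x; split; last exact: pq.
move=> qx; apply: contrapT => px.
have [g [gg [xg [b gE]]]] := idemP x.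
have qg : proj1_sig q g by rewrite gE; exact: prMr.
have pg : ~ proj1_sig p g by move=> pg; apply: px; rewrite -xg; exact: prMl.
have p1g : proj1_sig p (1 - g).
  have : proj1_sig p (g * (1 - g)) by rewrite mulrBr gg mulr1 subrr; exact: pr0.
  by case/prP.
apply: (@pr1 q); have -> : (1 : A) = g + (1 - g) by rewrite addrC subrK.
apply: prD => //; exact: pq.
Qed.

Lemma diag_inj (a : A) : (forall q : Spec A, proj1_sig q a) -> a = 0.
Proof.
move=> Ha; apply: contrapT => a0.
have [g [gg [ag [b gE]]]] := idemP a.
have g0 : g <> 0 by move=> g0; apply: a0; rewrite -ag g0 mulr0.
pose U (S : set A) := fun x => S x \/ x = 0.
pose P (S : set A) := is_ideal (U S) /\ ~ S g.
have [M0 [[[_ MD MM] Mg] Mmax]] : exists M0, P M0 /\ forall B, M0 `<` B -> ~ P B.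
  apply: Zorn_bigcup => F FP Ftot; split; last first.
    by case=> X FX Xg; have [_] := FP X FX; apply.
  have UV : forall X, F X -> forall z, U X z -> U (\bigcup_(X in F) X) z.
    by move=> X FX z [Xz|->]; [left; exists X|right].
  have key : forall x y, U (\bigcup_(X in F) X) x -> U (\bigcup_(X in F) X) y ->
      (x = 0 /\ y = 0) \/ exists X, F X /\ U X x /\ U X y.
    move=> x y [[X FX Xx]|->] [[Y FY Yy]|->].
    - right; case: (Ftot X Y FX FY) => [XY|YX].
        by exists Y; split => //; split; left => //; exact: XY.
      by exists X; split => //; split; left => //; exact: YX.
    - by right; exists X; split => //; split; [left|right].
    - by right; exists Y; split => //; split; [right|left].
    - by left.
  split; first by right.
  - move=> x y Hx Hy; case: (key x y Hx Hy) => [[-> ->]|[X [FX [Xx Xy]]]].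
      by right; rewrite addr0.
    apply: (UV X FX); have [[_ HD _] _] := FP X FX; exact: HD.
  - move=> r x Hx; case: (key x x Hx Hx) => [[-> _]|[X [FX [Xx _]]]].
      by right; rewrite mulr0.
    apply: (UV X FX); have [[_ _ HM] _] := FP X FX; exact: HM.
pose M := U M0.
have Mg' : ~ M g by case.
have M1 : ~ M 1 by move=> M1; apply: Mg'; rewrite -(mulr1 g); exact: (MM).
have Mprime : forall x y, M (x * y) -> M x \/ M y.
  move=> x y Mxy; apply: contrapT => /not_orP [nMx nMy].
  have ext : forall z, ~ M z -> exists m r, M m /\ g = m + z * r.
    move=> z nMz.
    pose Mz := fun w => exists m r, M m /\ w = m + z * r.
    have MzI : is_ideal (U Mz).
      split; first by right.
      - move=> u v [[m1 [r1 [Hm1 ->]]]|->] [[m2 [r2 [Hm2 ->]]]|->].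
        + left; exists (m1 + m2), (r1 + r2); split; first exact: MD.
          ring.
        + by left; exists m1, r1; rewrite addr0.
        + by left; exists m2, r2; rewrite add0r.
        + by right; rewrite addr0.
      - move=> r u [[m1 [r1 [Hm1 ->]]]|->].
        + left; exists (r * m1), (r * r1); split; first exact: (MM).
          ring.
        + by right; rewrite mulr0.
    have : ~ P Mz.
      apply: Mmax; split.
        by move=> w Mw; exists w, 0; split; [left|rewrite mulr0 addr0].
      move=> sub; apply: nMz; left; apply: sub; exists 0, 1.
      by split; [right|rewrite add0r mulr1].
    move=> nP; apply: contrapT => Hno; apply: nP; split => //.
  have [m1 [r1 [Hm1 E1]]] := ext x nMx.
  have [m2 [r2 [Hm2 E2]]] := ext y nMy.
  apply: Mg'; rewrite -gg {1}E1 E2.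
  have -> : (m1 + x * r1) * (m2 + y * r2) =
     m1 * (m2 + y * r2) + (m2 * (x * r1) + (x * y) * (r1 * r2)) by ring.
  apply: (MD); first by rewrite mulrC; exact: (MM).
  apply: (MD); first by rewrite mulrC; exact: (MM).
  by rewrite mulrC; exact: (MM).
have Mpr : prime_ideal M by split => //; split => //; right.
have := Ha (exist _ M Mpr) => /= Ma.
by apply: Mg'; rewrite gE mulrC; exact: (MM).
Qed.
End ALemmas.
Arguments idemP {A}. Arguments spec_neq {A}. Arguments diag_inj {A}.

Lemma backward (A : comPzRingType)
  (K : Spec A -> rcfType) (phi : forall q : Spec A, {rmorphism A -> K q})
  (p : Spec A) (e : epB K) :
  vN_regular A -> (forall q a, phi q a = 0 <-> proj1_sig q a) ->
  (forall q, q <> p -> e q = 1) -> e p = 0 ->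
  (exists I : epB K -> Prop,
    [/\ is_ideal_B I,
        (forall x, I x -> exists y, x = epB_mul e y) &
        exists (D : comPzRingType) (pi : epB K -> D),
          quotient_of I pi /\ essential_ext (fun a => pi (diag phi a))]) ->
  isolated_point p.
Proof.
move=> Hv Hker He1 He0 [I [[I0 ID IM] Hsub [D [pi [[piD piM pi1 pisurj piker] [inj ess]]]]]].
pose E : BT K := e.
have piD' : forall x y : BT K, pi (x + y) = pi x + pi y := piD.
have piM' : forall x y : BT K, pi (x * y) = pi x * pi y := piM.
have pi0 : pi (0 : BT K) = 0 by apply/piker.
have piN : forall x : BT K, pi (- x) = - pi x.
  by move=> x; apply: (addrI (pi x)); rewrite -piD' !subrr pi0.
have IB : forall u v : BT K, pi u = pi v -> I (u - v).
  by move=> u v H; apply/piker; rewrite piD' piN H subrr.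
have IM' : forall r x : BT K, I x -> I (r * x) := IM.
have diagM : forall a b, diag phi (a * b) = (diag phi a : BT K) * diag phi b.
  by move=> a b; apply: functional_extensionality_dep => q; rewrite /diag rmorphM.
have diag0 : diag phi 0 = (0 : BT K).
  by apply: functional_extensionality_dep => q; rewrite /diag rmorph0.
have e1e : E * (1 - E) = 0.
  apply: functional_extensionality_dep => q.
  have [->|nq] := pselect (q = p).
    by rewrite !BTE /E /= He0 mul0r.
  by rewrite !BTE /E /= He1 // subrr mulr0.
have ne : pi (1 - E) <> 0.
  move/piker => /Hsub [y /(f_equal (fun x : BT K => x p))].
  rewrite !BTE /E /= He0 subr0. rewrite /epB_mul He0 mul0r; exact/eqP/oner_neq0.
pose J := fun d : D => exists y : BT K, d = pi ((1 - E) * y).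
have HJ : is_ideal J.
  split.
  - by exists 0; rewrite mulr0 pi0.
  - by move=> _ _ [y1 ->] [y2 ->]; exists (y1 + y2); rewrite mulrDr piD'.
  - move=> r x [y ->]; have [z Hz] := pisurj r; rewrite -Hz; exists ((z : BT K) * y).
    by rewrite -piM' mulrCA.
have [a [[y Hy] na]] : exists a, J (pi (diag phi a)) /\ pi (diag phi a) <> 0.
  apply: ess => //; exists (pi (1 - E)); split => //; exists 1; by rewrite mulr1.
have Iea : I (E * diag phi a).
  have := IM' E _ (IB _ _ Hy).
  by rewrite mulrBr mulrA e1e mul0r subr0.
have [g [gg [ag [b gE]]]] := idemP Hv a.
have Ieg : I (E * diag phi g).
  by rewrite gE diagM mulrA mulrC; exact: IM'.
have pig : pi (diag phi g) <> 0.
  by move=> H; apply: na; rewrite -ag diagM piM' H mulr0.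
have eid : forall h, proj1_sig p h -> diag phi h = E * diag phi h.
  move=> h ph; apply: functional_extensionality_dep => q.
  have [->|nq] := pselect (q = p).
    by rewrite !BTE /E /= He0 mul0r; apply/Hker.
  by rewrite !BTE /E /= He1 // mul1r.
have npg : ~ proj1_sig p g.
  by move=> pg; apply: pig; apply/piker; rewrite eid //.
have Hq : forall q, q <> p -> proj1_sig q g.
  move=> q nq; apply: contrapT => nqg.
  have [k [pk nqk]] := spec_neq Hv _ _ nq.
  have pgk : proj1_sig p (g * k) by exact: prMl.
  have Igk : I (diag phi (g * k)).
    by rewrite eid // diagM mulrA mulrC; exact: IM'.
  have gk0 : g * k = 0.
    apply: inj => /=; rewrite diag0 pi0; exact/piker.
  have : proj1_sig q (g * k) by rewrite gk0; exact: pr0.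
  by case/prP.
split.
- exists (fun s => s = g) => q; split.
    by move=> -> /(_ g erefl).
  move=> H; apply: contrapT => nq; apply: H => s ->; exact: Hq.
- exists (fun s => s = 1 - g) => q; split.
    move=> -> s ->.
    have : proj1_sig p (g * (1 - g)) by rewrite mulrBr mulr1 gg subrr; exact: pr0.
    by case/prP.
  move=> H; apply: contrapT => nq; apply: (@pr1 _ q).
  rewrite -(subrK g 1); apply: prD; [exact: H | exact: Hq].
Qed.

Lemma forward (A : comPzRingType)
  (K : Spec A -> rcfType) (phi : forall q : Spec A, {rmorphism A -> K q})
  (p : Spec A) (e : epB K) :
  vN_regular A -> (forall q a, phi q a = 0 <-> proj1_sig q a) ->
  (forall q, q <> p -> e q = 1) -> e p = 0 ->
  isolated_point p ->
  (exists I : epB K -> Prop,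
    [/\ is_ideal_B I,
        (forall x, I x -> exists y, x = epB_mul e y) &
        exists (D : comPzRingType) (pi : epB K -> D),
          quotient_of I pi /\ essential_ext (fun a => pi (diag phi a))]).
Proof.
move=> Hv Hker He1 He0 [[S HS] _].
pose E : BT K := e.
have [s [Ss nps]] : exists s, S s /\ ~ proj1_sig p s.
  apply: contrapT => H; apply: ((HS p).1 erefl) => s Ss.
  apply: contrapT => nps; apply: H; by exists s.
have Sq : forall q, q <> p -> proj1_sig q s.
  move=> q nq; apply: contrapT => nqs; apply: nq; apply/(HS q).2 => H.
  by apply: nqs; exact: H s Ss.
have [f [ff [sf [b fE]]]] := idemP Hv s.
have phif : forall q, q <> p -> phi q f = 0.
  by move=> q nq; apply/Hker; rewrite fE; apply: prMr; exact: Sq.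
have phip : phi p f = 1.
  have npf : ~ proj1_sig p f by move=> pf; apply: nps; rewrite -sf; exact: prMl.
  have nz : phi p f != 0 by apply/eqP => /Hker.
  apply: (mulIf nz); rewrite mul1r -rmorphM ff //.
have diagf : diag phi f = 1 - E.
  apply: functional_extensionality_dep => q.
  have [->|nq] := pselect (q = p).
    by rewrite !BTE /E He0 subr0.
  by rewrite !BTE /E He1 // subrr; exact: phif.
have injdiag : forall a, diag phi a = (0 : BT K) -> a = 0.
  move=> a Ha; apply: (diag_inj Hv) => q; apply/Hker.
  by have := f_equal (fun x : BT K => x q) Ha.
have diagB : forall a a', diag phi (a - a') = (diag phi a : BT K) - (diag phi a' : BT K).
  by move=> a a'; apply: functional_extensionality_dep => q; rewrite BTE /diag rmorphB.
have diag0 : diag phi 0 = (0 : BT K).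
  by apply: functional_extensionality_dep => q; rewrite /diag rmorph0.
pose U (S : set (BT K)) := fun x => S x \/ x = 0.
pose P (S : set (BT K)) := [/\ (forall x y, U S x -> U S y -> U S (x + y)),
   (forall r x, U S x -> U S (r * x)),
   (forall x, U S x -> exists y, x = E * y) &
   (forall a, U S (diag phi a) -> a = 0)].
have [I0 [[ID IM Isub Idiag] Imax]] : exists I0, P I0 /\ forall B, I0 `<` B -> ~ P B.
  apply: Zorn_bigcup => F FP Ftot.
  have UV : forall X, F X -> forall z, U X z -> U (\bigcup_(X in F) X) z.
    by move=> X FX z [Xz|->]; [left; exists X|right].
  have key : forall x y, U (\bigcup_(X in F) X) x -> U (\bigcup_(X in F) X) y ->
      (x = 0 /\ y = 0) \/ exists X, F X /\ U X x /\ U X y.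
    move=> x y [[X FX Xx]|->] [[Y FY Yy]|->].
    - right; case: (Ftot X Y FX FY) => [XY|YX].
        by exists Y; split => //; split; left => //; exact: XY.
      by exists X; split => //; split; left => //; exact: YX.
    - by right; exists X; split => //; split; [left|right].
    - by right; exists Y; split => //; split; [right|left].
    - by left.
  split.
  - move=> x y Hx Hy; case: (key x y Hx Hy) => [[-> ->]|[X [FX [Xx Xy]]]].
      by right; rewrite addr0.
    apply: (UV X FX); have [HD _ _ _] := FP X FX; exact: HD.
  - move=> r x Hx; case: (key x x Hx Hx) => [[-> _]|[X [FX [Xx _]]]].
      by right; rewrite mulr0.
    apply: (UV X FX); have [_ HM _ _] := FP X FX; exact: HM.
  - move=> x [[X FX Xx]|->]; last by exists 0; rewrite mulr0.
    have [_ _ HS' _] := FP X FX; apply: HS'; by left.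
  - move=> a [[X FX Xx]|Ha]; last exact: injdiag.
    have [_ _ _ HD] := FP X FX; apply: HD; by left.
pose I := U I0.
have HI : is_ideal_B I.
  split; [by right | exact: ID | exact: IM].
have HI1 : ~ I (epB_one K).
  move=> /Isub [y /(f_equal (fun x : BT K => x p))].
  rewrite !BTE /E He0 mul0r; exact/eqP/oner_neq0.
have [D [pi Hq]] := @quot_exists A K p I HI HI1.
exists I; split => //; exists D, pi; split => //.
case: Hq => piD piM pi1 pisurj piker.
have piD' : forall x y : BT K, pi (x + y) = pi x + pi y := piD.
have piM' : forall x y : BT K, pi (x * y) = pi x * pi y := piM.
have pi0 : pi (0 : BT K) = 0 by apply/piker; right.
have piN : forall x : BT K, pi (- x) = - pi x.
  by move=> x; apply: (addrI (pi x)); rewrite -piD' !subrr pi0.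
have IB : forall u v : BT K, pi u = pi v -> I (u - v).
  by move=> u v H; apply/piker; rewrite piD' piN H subrr.
have inj : injective (fun a => pi (diag phi a)).
  move=> a a' /= H; apply/eqP; rewrite -subr_eq0; apply/eqP.
  by apply: Idiag; rewrite diagB; exact: IB.
split => // J [J0 JD JM] [d [Jd nd]].
have [x0 Hx0] := pisurj d.
pose J' := fun x : BT K => J (pi x).
have [Hs|Hns] := pselect (forall x, J' x -> exists y, x = E * y); last first.
  have [x [J'x nx]] : exists x, J' x /\ ~ exists y, x = E * y.
    apply: contrapT => H; apply: Hns => x J'x; apply: contrapT => nx.
    by apply: H; exists x.
  have xp : x p != 0.
    apply/eqP => xp0; apply: nx; exists x.
    apply: functional_extensionality_dep => q.
    have [->|nq] := pselect (q = p); first by rewrite BTE xp0 mulr0.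
    by rewrite BTE /E He1 // mul1r.
  exists f; split.
    pose y : BT K := fun q => (x q)^-1.
    have -> : diag phi f = (y * (1 - E)) * x.
      rewrite diagf; apply: functional_extensionality_dep => q.
      have [->|nq] := pselect (q = p).
        by rewrite !BTE /E /y He0 subr0 mulr1 mulVf.
      by rewrite !BTE /E He1 // subrr mulr0 mul0r.
    by rewrite /= piM'; exact: JM.
  move=> /= /piker /Isub [y /(f_equal (fun x : BT K => x p))].
  rewrite BTE /E /diag He0 mul0r phip; exact/eqP/oner_neq0.
apply: contrapT => Hno.
have J'0 : forall x, U J' x -> J' x by move=> x [//|->]; rewrite /J' pi0.
have : ~ P J'.
  apply: Imax; split.
    by move=> x Ix; rewrite /J' (_ : pi x = 0) //; apply/piker; left.
  move=> sub; apply: nd; rewrite -Hx0; apply/piker; left; apply: sub.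
  by rewrite /J' Hx0.
apply; split.
- by move=> x y /J'0 Hx /J'0 Hy; left; rewrite /J' piD'; exact: JD.
- by move=> r x /J'0 Hx; left; rewrite /J' piM'; exact: JM.
- by move=> x /J'0 /Hs.
- move=> a /J'0 Ja; apply: inj => /=; rewrite diag0 pi0.
  apply: contrapT => na; apply: Hno; by exists a.
Qed.

Local Close Scope classical_set_scope.
Local Close Scope quotient_scope.

Theorem mainTheorem9 (A : comPzRingType) (Apos : A -> Prop)
  (K : Spec A -> rcfType) (phi : forall q : Spec A, {rmorphism A -> K q})
  (p : Spec A) (e : epB K) :
  poring_cone Apos -> real_ring A -> baer_ring A -> vN_regular A ->
  is_epof Apos phi ->
  (forall q, q <> p -> e q = 1) -> e p = 0 ->
  isolated_point p <->
  exists I : epB K -> Prop,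
    [/\ is_ideal_B I,
        (forall x, I x -> exists y, x = epB_mul e y) &
        exists (D : comPzRingType) (pi : epB K -> D),
          quotient_of I pi /\ essential_ext (fun a => pi (diag phi a))].
Proof.
move=> _ _ _ Hv Hep He1 He0.
have Hker : forall q a, phi q a = 0 <-> proj1_sig q a.
  by move=> q a; have [H _ _] := Hep q; exact: H.
split; [exact: forward | exact: backward].
Qed.
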